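(* In the real plane, consider the conics $$\mathcal{C}:\ y=x^2\qquad\text{and}\qquad \Gamma:\ \alpha y=x^2+\beta xy+\gamma y^2,\quad \alpha\neq 1.$$ Then there is a closed polygonal line with $n$ sides inscribed in $\Gamma$ and circumscribed about $\mathcal{C}$ if and only if the following conditions are satisfied: (a) $\alpha=\cos^2\dfrac{\pi m}{n}$, where $m,n$ are positive integers with $2m<n$; and (b) $\beta^2-4\gamma(1-\alpha)>0$.
   Context: The conics are considered in an affine chart of the real projective plane. A polygonal line $A_1A_2\dots$ is inscribed in $\Gamma$ and circumscribed about $\mathcal{C}$ if all vertices $A_i$ lie on $\Gamma$ and each side line $A_iA_{i+1}$ is tangent to $\mathcal{C}$, consecutive sides through $A_i$ being the two distinct tangent lines from $A_i$ to $\mathcal{C}$. It is closed with $n$ sides if $A_{n+1}=A_1$. *)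

(* Defs.v *)
From Stdlib Require Import Reals.
Open Scope R_scope.

(* Homogeneous coordinates (x, y, z) of the real projective plane RP^2.
   A nonzero vector represents a point (or, dually, a line
   a x + b y + c z = 0).  The affine chart is z <> 0, with affine
   coordinates (x/z, y/z). *)
Definition vec := (R * R * R)%type.
Definition vx (v : vec) : R := fst (fst v).
Definition vy (v : vec) : R := snd (fst v).
Definition vz (v : vec) : R := snd v.
Definition vzero : vec := (0, 0, 0).

(* incidence of a point p with a line l *)
Definition dot (l p : vec) : R := vx l * vx p + vy l * vy p + vz l * vz p.

Definition cross (u v : vec) : vec :=
  (vy u * vz v - vz u * vy v,
   vz u * vx v - vx u * vz v,
   vx u * vy v - vy u * vx v).

Definition same_proj (u v : vec) : Prop := cross u v = vzero.

Definition on_C (p : vec) : Prop := vy p * vz p = vx p ^ 2.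

Definition on_Gamma (alpha beta gamma : R) (p : vec) : Prop :=
  alpha * vy p * vz p = vx p ^ 2 + beta * vx p * vy p + gamma * vy p ^ 2.

(* Tangent line to C at a point p of C: the line with coefficient vector
   the gradient of  y z - x^2  at p, i.e. (-2x, z, y). *)
Definition tangent_at_C (p : vec) : vec := (-2 * vx p, vz p, vy p).

Definition tangent_C (l : vec) : Prop :=
  l <> vzero /\
  exists p : vec, p <> vzero /\ on_C p /\ same_proj l (tangent_at_C p).

(* The line through two points (nonzero iff the points are distinct). *)
Definition line_through (A B : vec) : vec := cross A B.

Definition poncelet_closed (alpha beta gamma : R) (n : nat) : Prop :=
  exists A : nat -> vec,
    (forall i, (i <= n)%nat -> A i <> vzero /\ on_Gamma alpha beta gamma (A i)) /\
    (forall i, (i < n)%nat ->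
        line_through (A i) (A (S i)) <> vzero /\
        tangent_C (line_through (A i) (A (S i)))) /\
    (forall i, (0 < i < n)%nat ->
        ~ same_proj (line_through (A (i - 1)%nat) (A i))
                    (line_through (A i) (A (S i)))) /\
    same_proj (A n) (A 0%nat) /\
    ~ same_proj (line_through (A (n - 1)%nat) (A n)) (line_through (A 0%nat) (A 1%nat)).

(* Main.v *)
Require Import Defs.
From Stdlib Require Import Reals Lra Lia Psatz ZArith IndefiniteDescription.
Open Scope R_scope.

Lemma cos_step (t p : R) : cos (t + p + p) = 2 * cos p * cos (t + p) - cos t.
Proof.
  repeat (rewrite cos_plus || rewrite sin_plus). pose proof (sin2_cos2 p). unfold Rsqr in H.
  apply Rminus_diag_uniq. match goal with |- ?a - ?b = 0 =>
  replace (a - b) with (cos t * (1 - (sin p * sin p + cos p * cos p))) by ring end.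
  rewrite H. ring.
Qed.

Lemma sin_step (t p : R) : sin (t + p + p) = 2 * cos p * sin (t + p) - sin t.
Proof.
  repeat (rewrite cos_plus || rewrite sin_plus). pose proof (sin2_cos2 p). unfold Rsqr in H.
  apply Rminus_diag_uniq. match goal with |- ?a - ?b = 0 =>
  replace (a - b) with (sin t * (1 - (sin p * sin p + cos p * cos p))) by ring end.
  rewrite H. ring.
Qed.

Lemma cos_eq1_int (y : R) : cos y = 1 -> exists k : Z, y = 2 * IZR k * PI.
Proof.
  intros H. replace y with (2 * (y/2)) in H by field.
  rewrite cos_2a_sin in H.
  assert (sin (y/2) = 0) by nra.
  destruct (sin_eq_0_0 _ H0) as [k Hk]. exists k. lra.
Qed.

Lemma core_ellip (c : R) (n : nat) (f : nat -> R) :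
  -1 < c < 1 -> (1 <= n)%nat ->
  (forall k, (k < n)%nat -> f (S (S k)) = 2 * c * f (S k) - f k) ->
  f n = f 0%nat -> f (S n) = f 1%nat -> (f 0%nat <> 0 \/ f 1%nat <> 0) ->
  exists m : nat, (0 < m)%nat /\ (2 * m < n)%nat /\ c = cos (2 * PI * INR m / INR n).
Proof.
  intros Hc Hn Hrec Hp0 Hp1 Hnz.
  set (phi := acos c).
  assert (Hphi : 0 < phi < PI) by (apply acos_bound_lt; lra).
  assert (Hcp : cos phi = c) by (apply cos_acos; lra).
  assert (Hs : 0 < sin phi) by (apply sin_gt_0; lra).
  set (Q := (f 1%nat - f 0%nat * c) / sin phi).
  assert (Hform : forall k, (k <= n)%nat ->
     f k = f 0%nat * cos (INR k * phi) + Q * sin (INR k * phi) /\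
     f (S k) = f 0%nat * cos (INR (S k) * phi) + Q * sin (INR (S k) * phi)).
  { induction k as [|k IH]; intros Hk.
    - split.
      + simpl. rewrite Rmult_0_l, cos_0, sin_0. ring.
      + simpl. rewrite Rmult_1_l, Hcp. unfold Q. field. lra.
    - destruct IH as [IH1 IH2]; [lia|]. split; [exact IH2|].
      rewrite Hrec by lia. rewrite IH1, IH2.
      rewrite !S_INR. rewrite !Rmult_plus_distr_r, !Rmult_1_l.
      rewrite cos_step, sin_step, Hcp. ring. }
  destruct (Hform n (le_n n)) as [E1 E2].
  rewrite Hp0 in E1. rewrite Hp1 in E2.
  rewrite S_INR, Rmult_plus_distr_r, Rmult_1_l, cos_plus, sin_plus, Hcp in E2.
  set (C := cos (INR n * phi)) in *. set (S := sin (INR n * phi)) in *.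
  assert (E3 : Q * C - f 0%nat * S = Q).
  { assert (sin phi * (Q * C - f 0%nat * S - Q) = 0).
    { assert (f 1%nat = f 0%nat * c + Q * sin phi) by (unfold Q; field; lra).
      nra. }
    apply Rmult_integral in H as [H|H]; lra. }
  assert (HQ : f 0%nat <> 0 \/ Q <> 0).
  { destruct Hnz as [H|H]; [left; exact H|].
    destruct (Req_dec (f 0%nat) 0) as [H0|H0]; [right|left; exact H0].
    unfold Q. rewrite H0. intro HH. apply H.
    assert (f 1%nat = Q * sin phi) by (unfold Q; rewrite H0; field; lra).
    unfold Q in H1. rewrite H0 in H1. nra. }
  assert (HC : C = 1).
  { assert (A1: f 0%nat*(C-1) + Q*S = 0) by lra.
    assert (A2: Q*(C-1) - f 0%nat*S = 0) by lra.
    assert ((f 0%nat ^ 2 + Q ^ 2) * (C - 1) = 0).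
    { replace ((f 0%nat ^ 2 + Q ^ 2) * (C - 1)) with (f 0%nat*(f 0%nat*(C-1) + Q*S) + Q*(Q*(C-1) - f 0%nat*S)) by ring.
      rewrite A1, A2. ring. }
    apply Rmult_integral in H as [H|H]; [|lra].
    exfalso. destruct HQ; nra. }
  destruct (cos_eq1_int _ HC) as [k Hk].
  assert (Hnr : 0 < INR n) by (apply lt_0_INR; lia).
  assert (Hk0 : (0 < k)%Z).
  { apply lt_IZR. assert (0 < INR n * phi) by nra. pose proof PI_RGT_0. nra. }
  assert (Hk1 : (2 * k < Z.of_nat n)%Z).
  { apply lt_IZR. rewrite mult_IZR, <- INR_IZR_INZ. pose proof PI_RGT_0.
    assert (INR n * phi < INR n * PI) by nra. nra. }
  exists (Z.to_nat k). split; [lia|]. split; [lia|].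
  rewrite INR_IZR_INZ, Z2Nat.id by lia.
  rewrite <- Hcp. f_equal. field_simplify_eq; [|lra]. lra.
Qed.

Lemma pow_ne1 (r : R) (n : nat) : Rabs r <> 1 -> (1 <= n)%nat -> r ^ n <> 1.
Proof.
  intros Hr Hn He.
  assert (Rabs r ^ n = 1) by (rewrite RPow_abs, He; apply Rabs_R1).
  destruct (Rlt_or_le (Rabs r) 1) as [H1|H1].
  - pose proof (pow_lt_1_compat (Rabs r) n (conj (Rabs_pos r) H1) ltac:(lia)). lra.
  - assert (1 < Rabs r) by lra.
    pose proof (Rlt_pow_R1 _ n H0 ltac:(lia)). lra.
Qed.

Lemma geom_rec (c rho sig : R) (n : nat) (f : nat -> R) :
  rho + sig = 2 * c -> rho * sig = 1 ->
  (forall k, (k < n)%nat -> f (S (S k)) = 2 * c * f (S k) - f k) ->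
  forall k, (k <= n)%nat -> f (S k) - sig * f k = rho ^ k * (f 1%nat - sig * f 0%nat).
Proof.
  intros H1 H2 Hrec. induction k as [|k IH]; intros Hk.
  - simpl. ring.
  - rewrite Hrec by lia.
    replace (rho ^ S k * (f 1%nat - sig * f 0%nat)) with (rho * (rho ^ k * (f 1%nat - sig * f 0%nat))) by (simpl; ring).
    rewrite <- IH by lia.
    replace (2 * c) with (rho + sig) by lra.
    apply Rminus_diag_uniq.
    match goal with |- ?a - ?b = 0 => replace (a - b) with ((rho * sig - 1) * f k) by ring end.
    rewrite H2. ring.
Qed.

Lemma core_hyp (c : R) (n : nat) (f : nat -> R) :
  (c < -1 \/ 1 < c) -> (1 <= n)%nat ->
  (forall k, (k < n)%nat -> f (S (S k)) = 2 * c * f (S k) - f k) ->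
  f n = f 0%nat -> f (S n) = f 1%nat -> f 0%nat = 0 /\ f 1%nat = 0.
Proof.
  intros Hc Hn Hrec Hp0 Hp1.
  assert (Hd : 0 < c * c - 1) by (destruct Hc; nra).
  set (d := sqrt (c * c - 1)).
  assert (Hd0 : 0 < d) by (apply sqrt_lt_R0; lra).
  assert (Hdd : d * d = c * c - 1) by (apply sqrt_sqrt; lra).
  set (l := c + d). set (u := c - d).
  assert (Hlu : l * u = 1) by (unfold l, u; nra).
  assert (Hl : Rabs l <> 1).
  { intro H. assert (l * l = 1).
    { assert (Rabs (l*l) = l * l) by (apply Rabs_right; nra).
      rewrite Rabs_mult in H0. rewrite H in H0. lra. }
    unfold l in H0. nra. }
  assert (Hu : Rabs u <> 1).
  { intro H. assert (u * u = 1).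
    { assert (Rabs (u*u) = u * u) by (apply Rabs_right; nra).
      rewrite Rabs_mult in H0. rewrite H in H0. lra. }
    unfold u in H0. nra. }
  pose proof (geom_rec c l u n f ltac:(unfold l,u; lra) Hlu Hrec n (le_n n)) as G1.
  pose proof (geom_rec c u l n f ltac:(unfold l,u; lra) ltac:(lra) Hrec n (le_n n)) as G2.
  rewrite Hp0, Hp1 in G1, G2.
  pose proof (pow_ne1 l n Hl Hn). pose proof (pow_ne1 u n Hu Hn).
  assert (W1 : f 1%nat - u * f 0%nat = 0).
  { assert ((f 1%nat - u * f 0%nat) * (1 - l ^ n) = 0) by (transitivity ((f 1%nat - u * f 0%nat) - l ^ n * (f 1%nat - u * f 0%nat)); [ring|lra]).
    apply Rmult_integral in H1 as [|H1]; [assumption|]. lra. }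
  assert (W2 : f 1%nat - l * f 0%nat = 0).
  { assert ((f 1%nat - l * f 0%nat) * (1 - u ^ n) = 0) by (transitivity ((f 1%nat - l * f 0%nat) - u ^ n * (f 1%nat - l * f 0%nat)); [ring|lra]).
    apply Rmult_integral in H1 as [|H1]; [assumption|]. lra. }
  assert (f 0%nat = 0).
  { assert ((l - u) * f 0%nat = 0) by lra. apply Rmult_integral in H1 as [H1|H1]; [|assumption].
    unfold l, u in H1. lra. }
  split; [assumption|]. rewrite H1 in W1. lra.
Qed.

Lemma core_m1 (n : nat) (f : nat -> R) :
  (1 <= n)%nat ->
  (forall k, (k < n)%nat -> f (S (S k)) = 2 * (-1) * f (S k) - f k) ->
  f n = f 0%nat -> f (S n) = f 1%nat -> f 2%nat = f 0%nat.
Proof.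
  intros Hn Hrec Hp0 Hp1.
  set (d := - f 1%nat - f 0%nat).
  assert (Hform : forall k, (k <= n)%nat ->
    (-1) ^ k * f k = f 0%nat + INR k * d /\ (-1) ^ (S k) * f (S k) = f 0%nat + INR (S k) * d).
  { induction k as [|k IH]; intros Hk.
    - simpl. unfold d. split; ring.
    - destruct IH as [IH1 IH2]; [lia|]. split; [exact IH2|].
      rewrite Hrec by lia. rewrite !S_INR in *.
      replace ((-1) ^ S (S k) * (2 * -1 * f (S k) - f k)) with
        (2 * ((-1) ^ S k * f (S k)) - (-1) ^ k * f k) by (simpl; ring).
      rewrite IH1, IH2. ring. }
  destruct (Hform n (le_n n)) as [E1 E2].
  rewrite Hp0 in E1. rewrite Hp1 in E2. rewrite S_INR in E2.
  simpl in E2. set (s := (-1) ^ n) in *.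
  assert (Hd : d = 0).
  { assert (E3 : (s - 1) * d = 0) by (unfold d in *; lra).
    apply Rmult_integral in E3 as [E3|E3]; [|exact E3].
    assert (s = 1) by lra. rewrite H in E1.
    assert (INR n * d = 0) by lra. apply Rmult_integral in H0 as [H0|H0]; [|exact H0].
    exfalso. assert (0 < INR n) by (apply lt_0_INR; lia). lra. }
  rewrite Hrec by lia. unfold d in Hd. lra.
Qed.

Definition Gq (alpha beta gamma a b : R) : R :=
  a ^ 2 + b ^ 2 + (2 - 4 * alpha) * a * b + 2 * beta * (a + b) + 4 * gamma.

Lemma core_all (alpha beta gamma : R) (n : nat) (e : nat -> R) :
  alpha <> 1 -> (1 <= n)%nat ->
  (forall k, (k < n)%nat -> e (S (S k)) = (4 * alpha - 2) * e (S k) - e k - 2 * beta) ->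
  e n = e 0%nat -> e (S n) = e 1%nat -> e 0%nat <> e 1%nat -> e 0%nat <> e 2%nat ->
  Gq alpha beta gamma (e 0%nat) (e 1%nat) = 0 ->
  ((exists m : nat, (0 < m)%nat /\ (2 * m < n)%nat /\
      alpha = (cos (PI * INR m / INR n)) ^ 2) /\
   beta ^ 2 - 4 * gamma * (1 - alpha) > 0).
Proof.
  intros Ha Hn Hrec Hp0 Hp1 H01 H02 HG.
  assert (Ha1 : 1 - alpha <> 0) by lra.
  set (h := beta / (2 * (1 - alpha))).
  set (c := 2 * alpha - 1).
  set (f := fun k => e k + h).
  assert (Hfrec : forall k, (k < n)%nat -> f (S (S k)) = 2 * c * f (S k) - f k).
  { intros k Hk. unfold f, c. rewrite Hrec by exact Hk. unfold h. field. exact Ha1. }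
  assert (Hf0 : f n = f 0%nat) by (unfold f; rewrite Hp0; reflexivity).
  assert (Hf1 : f (S n) = f 1%nat) by (unfold f; rewrite Hp1; reflexivity).
  assert (HGf : (1 - alpha) * (f 0%nat ^ 2 + f 1%nat ^ 2 - 2 * c * f 0%nat * f 1%nat)
                = beta ^ 2 - 4 * gamma * (1 - alpha)).
  { unfold Gq in HG. unfold f, c, h.
    apply Rminus_diag_uniq. rewrite <- (Rmult_0_r (1 - alpha)) in HG.
    transitivity ((1 - alpha) * (e 0%nat ^ 2 + e 1%nat ^ 2 + (2 - 4 * alpha) * e 0%nat * e 1%nat +
      2 * beta * (e 0%nat + e 1%nat) + 4 * gamma)).
    - field. exact Ha1.
    - rewrite <- (Rmult_0_r (1 - alpha)). f_equal. lra. }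
  destruct (Rlt_or_le c (-1)) as [Hc1|Hc1].
  { exfalso. destruct (core_hyp c n f (or_introl Hc1) Hn Hfrec Hf0 Hf1). unfold f in *. lra. }
  destruct (Rlt_or_le 1 c) as [Hc2|Hc2].
  { exfalso. destruct (core_hyp c n f (or_intror Hc2) Hn Hfrec Hf0 Hf1). unfold f in *. lra. }
  destruct (Req_dec c (-1)) as [Hc3|Hc3].
  { exfalso. rewrite Hc3 in Hfrec. pose proof (core_m1 n f Hn Hfrec Hf0 Hf1). unfold f in *. lra. }
  assert (Hc4 : c <> 1) by (unfold c; lra).
  assert (Hc : -1 < c < 1) by lra.
  assert (Hnz : f 0%nat <> 0 \/ f 1%nat <> 0).
  { destruct (Req_dec (f 0%nat) 0); [right|left; assumption]. unfold f in *. lra. }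
  destruct (core_ellip c n f Hc Hn Hfrec Hf0 Hf1 Hnz) as [m [Hm1 [Hm2 Hm3]]].
  split.
  - exists m. split; [exact Hm1|]. split; [exact Hm2|].
    assert (Hn0 : INR n <> 0) by (apply not_0_INR; lia).
    replace (2 * PI * INR m / INR n) with (2 * (PI * INR m / INR n)) in Hm3 by (field; exact Hn0).
    rewrite cos_2a_cos in Hm3. unfold c in Hm3. simpl. lra.
  - assert (0 < 1 - alpha) by (unfold c in Hc; lra).
    assert (0 < f 0%nat ^ 2 + f 1%nat ^ 2 - 2 * c * f 0%nat * f 1%nat).
    { assert (0 < 1 - c * c) by nra.
      destruct Hnz as [Hz|Hz].
      - assert (0 < f 0%nat ^ 2) by (apply pow2_gt_0 || nra; exact Hz).
        assert (0 <= (f 1%nat - c * f 0%nat) ^ 2) by (apply pow2_ge_0).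
        assert (0 < (1 - c * c) * f 0%nat ^ 2) by (apply Rmult_lt_0_compat; assumption).
        replace (f 0%nat ^ 2 + f 1%nat ^ 2 - 2 * c * f 0%nat * f 1%nat) with
          ((f 1%nat - c * f 0%nat) ^ 2 + (1 - c * c) * f 0%nat ^ 2) by ring. lra.
      - assert (0 < f 1%nat ^ 2) by (apply pow2_gt_0 || nra; exact Hz).
        assert (0 <= (f 0%nat - c * f 1%nat) ^ 2) by (apply pow2_ge_0).
        assert (0 < (1 - c * c) * f 1%nat ^ 2) by (apply Rmult_lt_0_compat; assumption).
        replace (f 0%nat ^ 2 + f 1%nat ^ 2 - 2 * c * f 0%nat * f 1%nat) with
          ((f 0%nat - c * f 1%nat) ^ 2 + (1 - c * c) * f 1%nat ^ 2) by ring. lra. }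
    rewrite <- HGf. apply Rmult_lt_0_compat; assumption.
Qed.

Definition L (a : R) : vec := (-2 * a, a ^ 2, 1).
Definition scal (k : R) (v : vec) : vec := (k * vx v, k * vy v, k * vz v).

Lemma vec_eq (u v : vec) : vx u = vx v -> vy u = vy v -> vz u = vz v -> u = v.
Proof. destruct u as [[a b] c], v as [[d e] f]; unfold vx, vy, vz; simpl; intros H1 H2 H3; rewrite H1, H2, H3; reflexivity. Qed.

Lemma vec_neq (u : vec) : u <> vzero -> vx u <> 0 \/ vy u <> 0 \/ vz u <> 0.
Proof.
  intros H. destruct (Req_dec (vx u) 0); [|left; assumption].
  destruct (Req_dec (vy u) 0); [|right; left; assumption].
  destruct (Req_dec (vz u) 0); [|right; right; assumption].
  exfalso. apply H. apply vec_eq; assumption.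
Qed.

Lemma vzero_comp (u : vec) : u = vzero -> vx u = 0 /\ vy u = 0 /\ vz u = 0.
Proof. intros ->. simpl. auto. Qed.

Lemma side_param (alpha beta gamma : R) (A B : vec) :
  A <> vzero -> B <> vzero -> on_Gamma alpha beta gamma A -> on_Gamma alpha beta gamma B ->
  cross A B <> vzero -> tangent_C (cross A B) ->
  exists a k, k <> 0 /\ cross A B = scal k (L a).
Proof.
  intros HA HB GA GB HS [_ [p [Hp0 [HpC Hsp]]]].
  apply vzero_comp in Hsp. apply vec_neq in HA. apply vec_neq in HB.
  apply vec_neq in HS. apply vec_neq in Hp0.
  destruct A as [[ax ay] az], B as [[bx by0] bz], p as [[px py] pz].
  unfold on_Gamma, on_C, tangent_at_C, cross, vx, vy, vz in *; simpl in *.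
  destruct Hsp as [E1 [E2 E3]].
  destruct (Req_dec py 0) as [Hpy|Hpy].
  - exfalso. subst py. assert (px = 0) by nra. subst px.
    assert (Hpz : pz <> 0) by (destruct Hp0 as [H|[H|H]]; lra).
    assert (S1 : ay * bz - az * by0 = 0).
    { assert ((ay * bz - az * by0) * pz = 0) by nra.
      apply Rmult_integral in H as [H|H]; [exact H|contradiction]. }
    assert (S3 : ax * by0 - ay * bx = 0).
    { assert ((ax * by0 - ay * bx) * pz = 0) by nra.
      apply Rmult_integral in H as [H|H]; [exact H|contradiction]. }
    assert (S2 : az * bx - ax * bz <> 0) by (destruct HS as [H|[H|H]]; lra).
    assert (Hay : ay = 0).
    { assert ((az * bx - ax * bz) * ay = 0).
      { replace ((az * bx - ax * bz) * ay) with (-((ay * bz - az * by0) * ax) - (ax * by0 - ay * bx) * az) by ring.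
        rewrite S1, S3. ring. }
      apply Rmult_integral in H as [H|H]; [contradiction|exact H]. }
    assert (Hby : by0 = 0).
    { assert ((az * bx - ax * bz) * by0 = 0).
      { replace ((az * bx - ax * bz) * by0) with (-((ay * bz - az * by0) * bx) - (ax * by0 - ay * bx) * bz) by ring.
        rewrite S1, S3. ring. }
      apply Rmult_integral in H as [H|H]; [contradiction|exact H]. }
    subst ay by0. assert (ax = 0) by nra. assert (bx = 0) by nra. subst. lra.
  - set (sx := ay * bz - az * by0) in *. set (sy := az * bx - ax * bz) in *.
    set (sz := ax * by0 - ay * bx) in *.
    assert (Hsz : sz <> 0).
    { intro Hz. rewrite Hz in *.
      assert (sy = 0).
      { assert (sy * py = 0) by lra. apply Rmult_integral in H as [H|H]; [exact H|contradiction]. }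
      assert (sx = 0).
      { assert (sx * py = 0) by lra. apply Rmult_integral in H0 as [H0|H0]; [exact H0|contradiction]. }
      destruct HS as [H1|[H1|H1]]; contradiction. }
    exists (px / py), sz. split; [exact Hsz|].
    apply vec_eq; unfold scal, L, vx, vy, vz; simpl.
    + field_simplify_eq; [|exact Hpy]. lra.
    + assert (Hsy : sy = sz * pz / py) by (field_simplify_eq; [lra|exact Hpy]).
      assert (Hpz : pz = px ^ 2 / py) by (field_simplify_eq; [lra|exact Hpy]).
      rewrite Hsy, Hpz. field. exact Hpy.
    + ring.
Qed.

Definition vform (P : vec) (a b : R) : Prop :=
  vx P = vy P * (a + b) / 2 /\ vz P = vy P * a * b.

Lemma cross_dot1 (u v : vec) : dot (cross u v) u = 0.
Proof. unfold dot, cross, vx, vy, vz; simpl. ring. Qed.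
Lemma cross_dot2 (u v : vec) : dot (cross u v) v = 0.
Proof. unfold dot, cross, vx, vy, vz; simpl. ring. Qed.

Lemma on_L (k a : R) (P : vec) : k <> 0 -> dot (scal k (L a)) P = 0 -> dot (L a) P = 0.
Proof.
  intros Hk H. unfold dot, scal, L, vx, vy, vz in *; simpl in *.
  assert (k * (-2 * a * fst (fst P) + a ^ 2 * snd (fst P) + 1 * snd P) = 0) by (rewrite <- H; ring).
  apply Rmult_integral in H0 as [H0|H0]; [contradiction|exact H0].
Qed.

Lemma dot_scal (l P : vec) (t : R) : dot l (scal t P) = t * dot l P.
Proof. unfold dot, scal, vx, vy, vz; simpl. ring. Qed.

Lemma proportional (u v : vec) : cross u v = vzero -> u <> vzero -> exists t, v = scal t u.
Proof.
  intros H Hu. apply vzero_comp in H. apply vec_neq in Hu.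
  destruct u as [[ux uy] uz], v as [[wx wy] wz].
  unfold cross, scal, vx, vy, vz in *; simpl in *. destruct H as [E1 [E2 E3]].
  destruct Hu as [Hx|[Hy|Hz]].
  - exists (wx / ux). apply vec_eq; unfold vx, vy, vz; simpl; field_simplify_eq; try exact Hx; lra.
  - exists (wy / uy). apply vec_eq; unfold vx, vy, vz; simpl; field_simplify_eq; try exact Hy; lra.
  - exists (wz / uz). apply vec_eq; unfold vx, vy, vz; simpl; field_simplify_eq; try exact Hz; lra.
Qed.

Lemma not_same_L (k k' a b : R) : ~ same_proj (scal k (L a)) (scal k' (L b)) -> a <> b.
Proof.
  intros H Hab. subst b. apply H. unfold same_proj.
  apply vec_eq; unfold cross, scal, L, vx, vy, vz, vzero; simpl; ring.
Qed.

Lemma Gq_sym (al be ga a b : R) : Gq al be ga a b = Gq al be ga b a.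
Proof. unfold Gq. ring. Qed.

Lemma vieta (al be ga x a b : R) :
  Gq al be ga x a = 0 -> Gq al be ga x b = 0 -> a <> b -> a + b = (4 * al - 2) * x - 2 * be.
Proof.
  unfold Gq. intros H1 H2 H3.
  assert ((a - b) * (a + b + (2 - 4 * al) * x + 2 * be) = 0).
  { transitivity ((x ^ 2 + a ^ 2 + (2 - 4 * al) * x * a + 2 * be * (x + a) + 4 * ga) -
                  (x ^ 2 + b ^ 2 + (2 - 4 * al) * x * b + 2 * be * (x + b) + 4 * ga)); [ring|lra]. }
  apply Rmult_integral in H as [H|H]; lra.
Qed.

Lemma vertex (al be ga a b : R) (P : vec) :
  P <> vzero -> on_Gamma al be ga P -> dot (L a) P = 0 -> dot (L b) P = 0 -> a <> b ->
  vy P <> 0 /\ vform P a b /\ Gq al be ga a b = 0.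
Proof.
  intros HP HG Ha Hb Hab. apply vec_neq in HP.
  destruct P as [[x y] z]. unfold on_Gamma, dot, L, vform, Gq, vx, vy, vz in *; simpl in *.
  assert (Hx : x = y * (a + b) / 2).
  { assert ((a - b) * (-2 * x + (a + b) * y) = 0) by (transitivity ((-2 * a * x + a ^ 2 * y + 1 * z) - (-2 * b * x + b ^ 2 * y + 1 * z)); [ring|lra]).
    apply Rmult_integral in H as [H|H]; lra. }
  assert (Hz : z = y * a * b) by (subst x; nra).
  assert (Hy : y <> 0) by (intro; subst; destruct HP as [H|[H|H]]; lra).
  split; [exact Hy|]. split; [split; assumption|].
  subst x z.
  assert (y ^ 2 * (a ^ 2 + b ^ 2 + (2 - 4 * al) * a * b + 2 * be * (a + b) + 4 * ga) = 0).
  { transitivity (4 * ((y * (a + b) / 2) * ((y * (a + b) / 2) * 1) + be * (y * (a + b) / 2) * y + ga * (y * (y * 1)) - al * y * (y * a * b))); [field|lra]. }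
  apply Rmult_integral in H as [H|H]; [|exact H].
  exfalso. apply Hy. nra.
Qed.

Lemma vform_cross (P Q : vec) (a b : R) : vform P a b -> vform Q b a -> cross P Q = vzero.
Proof.
  destruct P as [[x y] z], Q as [[x' y'] z']. unfold vform, cross, vx, vy, vz, vzero; simpl.
  intros [H1 H2] [H3 H4]. subst. apply vec_eq; unfold vx, vy, vz; simpl; field.
Qed.

Lemma vform_scal (P : vec) (t a b : R) : vform P a b -> vform (scal t P) a b.
Proof.
  destruct P as [[x y] z]. unfold vform, scal, vx, vy, vz; simpl. intros [H1 H2]. subst. split; field.
Qed.

Lemma forward (alpha beta gamma : R) (n : nat) : alpha <> 1 ->
  poncelet_closed alpha beta gamma n ->
  ((exists m : nat, (0 < m)%nat /\ (2 * m < n)%nat /\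
      alpha = (cos (PI * INR m / INR n)) ^ 2) /\
   beta ^ 2 - 4 * gamma * (1 - alpha) > 0).
Proof.
  intros Ha [A [H1 [H2 [H3 [H4 H5]]]]].
  destruct n as [|[|n']].
  - exfalso. apply H5. simpl. unfold same_proj, line_through.
    apply vec_eq; unfold cross, vx, vy, vz, vzero; simpl; ring.
  - exfalso. apply H5. simpl. unfold same_proj.
    apply vec_eq; unfold cross, vx, vy, vz, vzero; simpl; ring.
  - set (n := S (S n')) in *. assert (Hn : (2 <= n)%nat) by (unfold n; lia).
    clearbody n.
    assert (Hside : forall i, exists a, (i < n)%nat -> exists k, k <> 0 /\
              line_through (A i) (A (S i)) = scal k (L a)).
    { intro i. destruct (lt_dec i n) as [Hi|Hi].
      - destruct (H1 i ltac:(lia)) as [Ai Gi]. destruct (H1 (S i) ltac:(lia)) as [Bi Gi'].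
        destruct (H2 i Hi) as [Ni Ti].
        destruct (side_param alpha beta gamma (A i) (A (S i)) Ai Bi Gi Gi' Ni Ti) as [a [k Hk]].
        exists a. intros _. exists k. exact Hk.
      - exists 0. intros; lia. }
    destruct (functional_choice _ Hside) as [a Ha'].
    assert (Inc1 : forall i, (i < n)%nat -> dot (L (a i)) (A i) = 0).
    { intros i Hi. destruct (Ha' i Hi) as [k [Hk E]]. apply (on_L k); [exact Hk|].
      rewrite <- E. apply cross_dot1. }
    assert (Inc2 : forall i, (i < n)%nat -> dot (L (a i)) (A (S i)) = 0).
    { intros i Hi. destruct (Ha' i Hi) as [k [Hk E]]. apply (on_L k); [exact Hk|].
      rewrite <- E. apply cross_dot2. }
    assert (Dif : forall i, (0 < i < n)%nat -> a (i - 1)%nat <> a i).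
    { intros i Hi. destruct (Ha' (i-1)%nat ltac:(lia)) as [k [Hk E]].
      destruct (Ha' i ltac:(lia)) as [k' [Hk' E']].
      apply (not_same_L k k'). rewrite <- E, <- E'.
      replace (S (i - 1)) with i by lia. apply H3; exact Hi. }
    assert (Difn : a (n - 1)%nat <> a 0%nat).
    { destruct (Ha' (n-1)%nat ltac:(lia)) as [k [Hk E]].
      destruct (Ha' 0%nat ltac:(lia)) as [k' [Hk' E']].
      apply (not_same_L k k'). rewrite <- E, <- E'.
      replace (S (n - 1)) with n by lia. exact H5. }
    destruct (H1 n (le_n n)) as [An Gn].
    destruct (H1 0%nat ltac:(lia)) as [A0 G0].
    destruct (proportional _ _ H4 An) as [t Ht].
    assert (Ht0 : t <> 0).
    { intro. subst t. apply A0. rewrite Ht. apply vec_eq; unfold scal, vx, vy, vz, vzero; simpl; ring. }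
    assert (IncN : dot (L (a 0%nat)) (A n) = 0).
    { pose proof (Inc1 0%nat ltac:(lia)). rewrite Ht, dot_scal in H.
      apply Rmult_integral in H as [H|H]; [contradiction|exact H]. }
    set (e := fun k => if (k <? n)%nat then a k else a (k - n)%nat).
    assert (Ek : forall k, (k < n)%nat -> e k = a k).
    { intros k Hk. unfold e. replace (k <? n)%nat with true; [reflexivity|].
      symmetry. apply Nat.ltb_lt. exact Hk. }
    assert (En : e n = a 0%nat).
    { unfold e. replace (n <? n)%nat with false by (symmetry; apply Nat.ltb_ge; lia).
      f_equal. lia. }
    assert (En1 : e (S n) = a 1%nat).
    { unfold e. replace (S n <? n)%nat with false by (symmetry; apply Nat.ltb_ge; lia).
      f_equal. lia. }
    assert (Vert : forall j, (1 <= j <= n)%nat ->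
       vy (A j) <> 0 /\ vform (A j) (e (j - 1)%nat) (e j) /\ Gq alpha beta gamma (e (j - 1)%nat) (e j) = 0).
    { intros j Hj. destruct (H1 j ltac:(lia)) as [Aj Gj].
      rewrite (Ek (j-1)%nat) by lia.
      destruct (Nat.eq_dec j n) as [Hjn|Hjn].
      - subst j. rewrite En. apply vertex; try assumption.
        replace n with (S (n - 1)) at 2 by lia. apply Inc2. lia.
      - rewrite (Ek j) by lia. apply vertex; try assumption.
        + replace j with (S (j - 1)) at 2 by lia. apply Inc2. lia.
        + apply Inc1. lia.
        + apply Dif. lia. }
    assert (GqAll : forall k, (k < n)%nat -> Gq alpha beta gamma (e k) (e (S k)) = 0
                                   /\ Gq alpha beta gamma (e (S k)) (e (S (S k))) = 0).
    { intros k Hk. split.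
      - destruct (Vert (S k) ltac:(lia)) as [_ [_ G]]. replace (S k - 1)%nat with k in G by lia. exact G.
      - destruct (Nat.eq_dec (S k) n) as [Hkn|Hkn].
        + rewrite Hkn, En, En1. destruct (Vert 1%nat ltac:(lia)) as [_ [_ G]].
          change (1 - 1)%nat with 0%nat in G; rewrite (Ek 1%nat), (Ek 0%nat) in G by lia. exact G.
        + destruct (Vert (S (S k)) ltac:(lia)) as [_ [_ G]].
          replace (S (S k) - 1)%nat with (S k) in G by lia. exact G. }
    assert (Dist : forall k, (k < n)%nat -> e k <> e (S (S k))).
    { intros k Hk Heq.
      destruct (Nat.eq_dec (S k) n) as [Hkn|Hkn].
      - assert (Hk' : k = (n - 1)%nat) by lia.
        destruct (H2 0%nat ltac:(lia)) as [N0 _]. apply N0. unfold line_through.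
        rewrite Ht. apply (vform_cross _ _ (e k) (a 0%nat)).
        + apply vform_scal. destruct (Vert n ltac:(lia)) as [_ [V _]].
          rewrite En in V. rewrite Hk'. exact V.
        + destruct (Vert 1%nat ltac:(lia)) as [_ [V _]].
          change (1 - 1)%nat with 0%nat in V; rewrite (Ek 1%nat), (Ek 0%nat) in V by lia. rewrite Heq, Hkn, En1. exact V.
      - destruct (H2 (S k) ltac:(lia)) as [N0 _]. apply N0. unfold line_through.
        apply (vform_cross _ _ (e k) (e (S k))).
        + destruct (Vert (S k) ltac:(lia)) as [_ [V _]].
          replace (S k - 1)%nat with k in V by lia. exact V.
        + destruct (Vert (S (S k)) ltac:(lia)) as [_ [V _]].
          replace (S (S k) - 1)%nat with (S k) in V by lia. rewrite Heq. exact V. }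
    apply (core_all alpha beta gamma n e Ha ltac:(lia)).
    + intros k Hk. destruct (GqAll k Hk) as [G1 G2].
      rewrite Gq_sym in G1.
      pose proof (vieta alpha beta gamma (e (S k)) (e k) (e (S (S k))) G1 G2 (Dist k Hk)). lra.
    + rewrite En, Ek by lia. reflexivity.
    + rewrite En1, Ek by lia. reflexivity.
    + rewrite !Ek by lia. replace (a 0%nat) with (a (1 - 1)%nat) by reflexivity. apply Dif. lia.
    + apply Dist. lia.
    + destruct (GqAll 0%nat ltac:(lia)) as [G _]. exact G.
Qed.

Lemma Gq_shift (al be ga a b : R) : 1 - al <> 0 ->
  Gq al be ga a b =
   (a + be / (2 * (1 - al))) ^ 2 + (b + be / (2 * (1 - al))) ^ 2
   - 2 * (2 * al - 1) * (a + be / (2 * (1 - al))) * (b + be / (2 * (1 - al)))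
   - (be ^ 2 - 4 * ga * (1 - al)) / (1 - al).
Proof. intros H. unfold Gq. field. exact H. Qed.

Lemma trig_id (x t : R) :
  cos x ^ 2 + cos (x + t) ^ 2 - 2 * cos t * cos x * cos (x + t) = sin t ^ 2.
Proof.
  rewrite cos_plus. pose proof (sin2_cos2 x). pose proof (sin2_cos2 t). unfold Rsqr in *.
  apply Rminus_diag_uniq.
  match goal with |- ?a - ?b = 0 => replace (a - b) with
    (cos x ^ 2 * (1 - (sin t * sin t + cos t * cos t)) + sin t ^ 2 * ((sin x * sin x + cos x * cos x) - 1)) by ring end.
  rewrite H, H0. ring.
Qed.

Lemma odd_sin (n N : nat) : (0 < n)%nat -> sin (PI * INR (2 * N + 1) / INR (2 * n)) <> 0.
Proof.
  intros Hn H. destruct (sin_eq_0_0 _ H) as [z Hz].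
  assert (Hn2 : INR (2 * n) <> 0) by (apply not_0_INR; lia).
  pose proof PI_RGT_0.
  assert (INR (2 * N + 1) = IZR z * INR (2 * n)).
  { apply (Rmult_eq_reg_r (PI / INR (2 * n))).
    - transitivity (PI * INR (2 * N + 1) / INR (2 * n)); [field; exact Hn2|].
      rewrite Hz. field. exact Hn2.
    - apply Rmult_integral_contrapositive; split; [lra|]. apply Rinv_neq_0_compat; exact Hn2. }
  rewrite !INR_IZR_INZ, <- mult_IZR in H1. apply eq_IZR in H1. lia.
Qed.

Lemma not_same_L2 (k1 k2 p q : R) : k1 <> 0 -> k2 <> 0 -> p <> q ->
  ~ same_proj (scal k1 (L p)) (scal k2 (L q)).
Proof.
  intros H1 H2 H3 H. apply vzero_comp in H. destruct H as [_ [Hy _]].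
  unfold cross, scal, L, vx, vy, vz in Hy; simpl in Hy.
  assert (k1 * k2 * (2 * (p - q)) = 0) by (rewrite <- Hy; ring).
  apply Rmult_integral in H as [H|H]; [apply Rmult_integral in H as [H|H]; contradiction|lra].
Qed.

Lemma tangent_L (k p : R) : k <> 0 -> tangent_C (scal k (L p)).
Proof.
  intros Hk. split.
  - intro H. apply vzero_comp in H. unfold scal, L, vx, vy, vz in H; simpl in H. lra.
  - exists (p, 1, p ^ 2). split; [|split].
    + intro H. apply vzero_comp in H. unfold vy in H; simpl in H. lra.
    + unfold on_C, vx, vy, vz; simpl. ring.
    + unfold same_proj. apply vec_eq; unfold cross, scal, L, tangent_at_C, vx, vy, vz, vzero; simpl; ring.
Qed.

Definition Vt (a b : R) : vec := (a + b, 2, 2 * a * b).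

Lemma Vt_cross (a b c : R) : line_through (Vt a b) (Vt b c) = scal (2 * (a - c)) (L b).
Proof. apply vec_eq; unfold line_through, cross, Vt, scal, L, vx, vy, vz; simpl; ring. Qed.

Lemma Vt_Gamma (al be ga a b : R) : Gq al be ga a b = 0 -> on_Gamma al be ga (Vt a b).
Proof.
  intros H. unfold on_Gamma, Vt, vx, vy, vz; simpl.
  apply Rminus_diag_uniq. transitivity (- Gq al be ga a b); [unfold Gq; ring|rewrite H; ring].
Qed.

Lemma Vt_nz (a b : R) : Vt a b <> vzero.
Proof. intro H. apply vzero_comp in H. unfold Vt, vy in H; simpl in H. lra. Qed.

Lemma backward (alpha beta gamma : R) (n : nat) : alpha <> 1 ->
  ((exists m : nat, (0 < m)%nat /\ (2 * m < n)%nat /\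
      alpha = (cos (PI * INR m / INR n)) ^ 2) /\
   beta ^ 2 - 4 * gamma * (1 - alpha) > 0) ->
  poncelet_closed alpha beta gamma n.
Proof.
  intros Ha [[m [Hm1 [Hm2 Hal]]] HD].
  pose proof PI_RGT_0 as Hpi.
  assert (Hn0 : (0 < n)%nat) by lia.
  assert (Hnr : 0 < INR n) by (apply lt_0_INR; lia).
  assert (Hmr : 0 < INR m) by (apply lt_0_INR; lia).
  assert (Hmn : 2 * INR m < INR n).
  { replace 2 with (INR 2) by reflexivity. rewrite <- mult_INR. apply lt_INR. lia. }
  set (th := 2 * PI * INR m / INR n).
  assert (Hth : 0 < th < PI).
  { unfold th. split.
    - apply Rmult_lt_0_compat; [nra|]. apply Rinv_0_lt_compat; lra.
    - apply (Rmult_lt_reg_r (INR n)); [lra|]. unfold Rdiv. rewrite Rmult_assoc, Rinv_l by lra. nra. }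
  assert (Hsth : 0 < sin th) by (apply sin_gt_0; lra).
  assert (Hsth2 : 0 < sin (th / 2)) by (apply sin_gt_0; lra).
  assert (Hc : 2 * alpha - 1 = cos th).
  { unfold th. replace (2 * PI * INR m / INR n) with (2 * (PI * INR m / INR n)) by (field; lra).
    rewrite cos_2a_cos, Hal. ring. }
  assert (Hal1 : 0 < 1 - alpha).
  { assert (alpha <= 1) by (rewrite Hal; pose proof (COS_bound (PI * INR m / INR n)); nra). lra. }
  set (h := beta / (2 * (1 - alpha))).
  set (K := (beta ^ 2 - 4 * gamma * (1 - alpha)) / (1 - alpha)).
  assert (HK : 0 < K) by (unfold K; apply Rdiv_lt_0_compat; lra).
  set (r := sqrt K / sin th).
  assert (Hr : 0 < r) by (unfold r; apply Rdiv_lt_0_compat; [apply sqrt_lt_R0; lra|lra]).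
  assert (Hrs : (r * sin th) ^ 2 = K).
  { unfold r. replace (sqrt K / sin th * sin th) with (sqrt K) by (field; lra).
    simpl. rewrite Rmult_1_r. apply sqrt_sqrt. lra. }
  set (x0 := PI / INR (2 * n)).
  set (b := fun k : nat => - h + r * cos (x0 + INR k * th)).
  assert (HG : forall k, Gq alpha beta gamma (b k) (b (S k)) = 0).
  { intro k. rewrite Gq_shift by lra. fold h. fold K. unfold b.
    replace (x0 + INR (S k) * th) with ((x0 + INR k * th) + th) by (rewrite S_INR; ring).
    set (p := x0 + INR k * th). rewrite Hc.
    replace (- h + r * cos p + h) with (r * cos p) by ring.
    replace (- h + r * cos (p + th) + h) with (r * cos (p + th)) by ring.
    rewrite <- Hrs.
    match goal with |- ?a = 0 => replace a with
      (r ^ 2 * (cos p ^ 2 + cos (p + th) ^ 2 - 2 * cos th * cos p * cos (p + th)) - (r * sin th) ^ 2) by ring end.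
    rewrite trig_id. ring. }
  assert (Hodd : forall N, sin (PI * INR (2 * N + 1) / INR (2 * n)) <> 0)
    by (intro N; apply odd_sin; exact Hn0).
  assert (Hn2 : INR (2 * n) = 2 * INR n) by (rewrite mult_INR; reflexivity).
  assert (D1 : forall k, b k <> b (S k)).
  { intros k Heq. unfold b in Heq.
    assert (cos (x0 + INR k * th) - cos (x0 + INR (S k) * th) = 0).
    { apply (Rmult_eq_reg_l r); [|lra]. lra. }
    rewrite form2 in H.
    replace ((x0 + INR k * th - (x0 + INR (S k) * th)) / 2) with (- (th / 2)) in H by (rewrite S_INR; field).
    replace ((x0 + INR k * th + (x0 + INR (S k) * th)) / 2) with
       (PI * INR (2 * (2 * m * k + m) + 1) / INR (2 * n)) in H.
    2:{ unfold x0, th. rewrite Hn2, S_INR; repeat (rewrite plus_INR || rewrite mult_INR). simpl. field. lra. }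
    rewrite sin_neg in H. apply (Hodd (2 * m * k + m)%nat).
    apply Rmult_integral in H as [H|H]; [|exact H]. exfalso. lra. }
  assert (D2 : forall k, b k <> b (S (S k))).
  { intros k Heq. unfold b in Heq.
    assert (cos (x0 + INR k * th) - cos (x0 + INR (S (S k)) * th) = 0).
    { apply (Rmult_eq_reg_l r); [|lra]. lra. }
    rewrite form2 in H.
    replace ((x0 + INR k * th - (x0 + INR (S (S k)) * th)) / 2) with (- th) in H by (rewrite !S_INR; field).
    replace ((x0 + INR k * th + (x0 + INR (S (S k)) * th)) / 2) with
       (PI * INR (2 * (2 * m * (k + 1)) + 1) / INR (2 * n)) in H.
    2:{ unfold x0, th. rewrite Hn2, !S_INR; repeat (rewrite plus_INR || rewrite mult_INR). simpl. field. lra. }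
    rewrite sin_neg in H. apply (Hodd (2 * m * (k + 1))%nat).
    apply Rmult_integral in H as [H|H]; [|exact H]. exfalso. lra. }
  assert (P0 : b n = b 0%nat).
  { unfold b. replace (x0 + INR n * th) with (x0 + INR 0 * th + 2 * INR m * PI).
    - rewrite cos_period. reflexivity.
    - unfold th. rewrite INR_0. field. lra. }
  assert (P1 : b (S n) = b 1%nat).
  { unfold b. replace (x0 + INR (S n) * th) with (x0 + INR 1 * th + 2 * INR m * PI).
    - rewrite cos_period. reflexivity.
    - unfold th. rewrite !S_INR, INR_0. field. lra. }
  set (B := fun k => Vt (b k) (b (S k))).
  assert (Side : forall k, line_through (B k) (B (S k)) = scal (2 * (b k - b (S (S k)))) (L (b (S k)))).
  { intro k. unfold B. apply Vt_cross. }
  assert (Sk : forall k, 2 * (b k - b (S (S k))) <> 0).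
  { intros k H. apply (D2 k). lra. }
  exists B. split; [|split; [|split; [|split]]].
  - intros i _. split; [apply Vt_nz|]. apply Vt_Gamma. apply HG.
  - intros i _. rewrite Side. split.
    + intro H. apply vzero_comp in H. unfold scal, L, vz in H; simpl in H. destruct H as [_ [_ H]].
      apply (Sk i). lra.
    + apply tangent_L. apply Sk.
  - intros i Hi. destruct i as [|j]; [lia|]. replace (S j - 1)%nat with j by lia.
    rewrite !Side. apply not_same_L2; try apply Sk. apply D1.
  - unfold B. rewrite P0, P1. unfold same_proj. apply vec_eq; unfold cross, vx, vy, vz, vzero; simpl; ring.
  - destruct n as [|n']; [lia|]. replace (S n' - 1)%nat with n' by lia.
    rewrite !Side. apply not_same_L2; try apply Sk. rewrite P0. apply D1.
Qed.

Theorem theorem2p7 (alpha beta gamma : R) (n : nat) (halpha : alpha <> 1) :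
  poncelet_closed alpha beta gamma n <->
  ((exists m : nat, (0 < m)%nat /\ (2 * m < n)%nat /\
      alpha = (cos (PI * INR m / INR n)) ^ 2) /\
   beta ^ 2 - 4 * gamma * (1 - alpha) > 0).
Proof.
  split.
  - apply forward. exact halpha.
  - apply backward. exact halpha.
Qed.
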